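(* Let $\alpha,\beta,C,A,K,K_h,K_s>0$ be constants with $\alpha K_h>K_s$, and set $h_*=1-\frac{K_s}{\alpha K_h}>0$. For $s\ge 0$ and $\eta>0$ define \[ \hat r(\eta)=\Bigl(\frac{\beta C}{\eta}+1+\frac{\beta}{C}\eta\Bigr)^{-1},\qquad \hat v_0(\eta)=\alpha AK\eta^2-K_h, \] \[ \hat q_0(s,\eta)=\tfrac12\sqrt{\hat v_0(\eta)^2+4AK\hat r(\eta)\eta^2 s}-\tfrac12\hat v_0(\eta), \] \[ \hat f_0(s,\eta)=-\hat r(\eta)s+K_s,\qquad \hat g_0(s,\eta)=-\hat q_0(s,\eta)+K_h, \] the slow and fast components of the singular fast–slow system $\frac{ds}{dt}=\hat f_0(s,\eta)$, $\epsilon\frac{d\eta}{dt}=\hat g_0(s,\eta)$ (with $s$ slow, $\eta$ fast). Let \[ \hat{\mathcal S}_B=\{(\psi(\eta),\eta):\eta>0\},\qquad \psi(\eta)=\frac{\alpha K_h}{\hat r(\eta)}, \] which is the part of the critical manifold $\{\hat g_0=0\}$ lying in $\eta>0$. Then $\hat{\mathcal S}_B$ possesses a single fold point, namely \[ F_B=(s_B,\eta_B)=\bigl(\alpha K_h(2\beta+1),\,C\bigr), \] and this point is a generic fold point.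
   Context: For a fast–slow system $\dot x=f(x,y)$, $\epsilon\dot y=g(x,y)$ with slow variable $x$ and fast variable $y$, a point $P$ on the critical manifold $\{g=0\}$ is a fold point if $g(P)=0$ and $\partial_y g(P)=0$; it is a generic fold point if in addition $\partial_y^2 g(P)\neq 0$ and $\partial_x g(P)\neq 0$ (nondegeneracy) and $f(P)\neq 0$ (transversality of the slow flow). Here $x=s$, $y=\eta$, $f=\hat f_0$, $g=\hat g_0$. *)

(* Defs.v *)
From Stdlib Require Import Reals.
From Coquelicot Require Import Coquelicot.
Open Scope R_scope.

Definition rhat (beta C eta : R) : R :=
  / (beta * C / eta + 1 + beta / C * eta).

Definition v0hat (alpha A K Kh eta : R) : R :=
  alpha * A * K * eta ^ 2 - Kh.

Definition q0hat (alpha beta C A K Kh s eta : R) : R :=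
  / 2 * sqrt (v0hat alpha A K Kh eta ^ 2
              + 4 * A * K * rhat beta C eta * eta ^ 2 * s)
  - / 2 * v0hat alpha A K Kh eta.

Definition f0hat (beta C Ks s eta : R) : R := - rhat beta C eta * s + Ks.

Definition g0hat (alpha beta C A K Kh s eta : R) : R :=
  - q0hat alpha beta C A K Kh s eta + Kh.

Definition psi (alpha beta C Kh eta : R) : R := alpha * Kh / rhat beta C eta.

Definition fold_point (g : R -> R -> R) (x y : R) : Prop :=
  g x y = 0 /\
  ex_derive (fun y' => g x y') y /\ Derive (fun y' => g x y') y = 0.

Definition generic_fold_point (f g : R -> R -> R) (x y : R) : Prop :=
  fold_point g x y /\
  ex_derive_n (fun y' => g x y') 2 y /\ Derive_n (fun y' => g x y') 2 y <> 0 /\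
  ex_derive (fun x' => g x' y) x /\ Derive (fun x' => g x' y) x <> 0 /\
  f x y <> 0.

(* Main.v *)
Require Import Defs.
From Stdlib Require Import Reals.
From Coquelicot Require Import Coquelicot.
From Stdlib Require Import Lra Psatz.
Open Scope R_scope.

Definition Dn (b C y : R) := b * C / y + 1 + b / C * y.
Definition Dn1 (b C y : R) := - (b * C / y ^ 2) + b / C.
Definition Sx al b C A K Kh s y :=
  v0hat al A K Kh y ^ 2 + 4 * A * K * rhat b C y * y ^ 2 * s.
Definition G1 al b C A K Kh s y :=
  - (/ 2 * ((2 * v0hat al A K Kh y * (2 * al * A * K * y)
            + 4 * A * K * s * (2 * y / Dn b C y - y ^ 2 * Dn1 b C y / (Dn b C y) ^ 2))
           / (2 * sqrt (Sx al b C A K Kh s y)))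
     - / 2 * (2 * al * A * K * y)).

Lemma Dn_pos b C y : 0 < b -> 0 < C -> 0 < y -> 0 < Dn b C y.
Proof.
  intros. unfold Dn. assert (0 < b * C / y) by (apply Rdiv_lt_0_compat; nra).
  assert (0 < b / C * y) by (apply Rmult_lt_0_compat; [apply Rdiv_lt_0_compat|]; lra).
  lra.
Qed.

Lemma rhat_pos b C y : 0 < b -> 0 < C -> 0 < y -> 0 < rhat b C y.
Proof. intros. unfold rhat. apply Rinv_0_lt_compat. apply (Dn_pos b C y); auto. Qed.

Lemma Sx_pos al b C A K Kh s y : 0 < b -> 0 < C -> 0 < A -> 0 < K -> 0 < s -> 0 < y ->
  0 < Sx al b C A K Kh s y.
Proof.
  intros. unfold Sx. pose proof (rhat_pos b C y H H0 H4).
  assert (0 < 4 * A * K * rhat b C y * y ^ 2 * s).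
  { repeat apply Rmult_lt_0_compat; try lra; try apply pow_lt; lra. }
  assert (0 <= v0hat al A K Kh y ^ 2) by (rewrite <- Rsqr_pow2; apply Rle_0_sqr).
  lra.
Qed.

Lemma G_deriv al b C A K Kh s y : 0 < b -> 0 < C -> 0 < A -> 0 < K -> 0 < s -> 0 < y ->
  is_derive (fun y' => g0hat al b C A K Kh s y') y (G1 al b C A K Kh s y).
Proof.
  intros. pose proof (Sx_pos al b C A K Kh s y H H0 H1 H2 H3 H4) as HS.
  pose proof (Dn_pos b C y H H0 H4) as HD.
  pose proof (sqrt_lt_R0 _ HS) as Hq.
  unfold g0hat, q0hat, v0hat, rhat. auto_derive.
  - change (b * C * / y + 1 + b / C * y) with (Dn b C y).
    match goal with |- context [0 < ?e] => replace e with (Sx al b C A K Kh s y) end.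
    repeat split; lra. unfold Sx, v0hat, rhat, Dn; ring.
  - change (b * C * / y + 1 + b / C * y) with (Dn b C y).
    match goal with |- context [sqrt ?e] => replace e with (Sx al b C A K Kh s y)
      by (unfold Sx, v0hat, rhat, Dn; ring) end.
    unfold G1, Dn1, v0hat.
    set (q := sqrt (Sx al b C A K Kh s y)) in *.
    set (D := Dn b C y) in *.
    field. repeat split; lra.
Qed.

Lemma psi_eq al b C Kh y : 0 < b -> 0 < C -> 0 < y -> psi al b C Kh y = al * Kh * Dn b C y.
Proof.
  intros. pose proof (Dn_pos b C y H H0 H1). unfold psi, rhat.
  change (b * C / y + 1 + b / C * y) with (Dn b C y). field. lra.
Qed.

Lemma Sx_on al b C A K Kh y : 0 < b -> 0 < C -> 0 < y ->
  Sx al b C A K Kh (al * Kh * Dn b C y) y = (al * A * K * y ^ 2 + Kh) ^ 2.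
Proof.
  intros. pose proof (Dn_pos b C y H H0 H1). unfold Sx, v0hat, rhat.
  change (b * C / y + 1 + b / C * y) with (Dn b C y). field. lra.
Qed.

Lemma sqrt_on al b C A K Kh y : 0 < al -> 0 < b -> 0 < C -> 0 < A -> 0 < K -> 0 < Kh -> 0 < y ->
  sqrt (Sx al b C A K Kh (al * Kh * Dn b C y) y) = al * A * K * y ^ 2 + Kh.
Proof.
  intros. rewrite Sx_on by auto. apply sqrt_pow2.
  assert (0 < al * A * K * y ^ 2) by (repeat apply Rmult_lt_0_compat; try apply pow_lt; lra). lra.
Qed.

Lemma crit al b C A K Kh s y : 0 < al -> 0 < b -> 0 < C -> 0 < A -> 0 < K -> 0 < Kh -> 0 <= s -> 0 < y ->
  (g0hat al b C A K Kh s y = 0 <-> s = psi al b C Kh y).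
Proof.
  intros. rewrite psi_eq by auto. pose proof (Dn_pos b C y H0 H1 H6) as HD.
  assert (HW : 0 < al * A * K * y ^ 2) by (repeat apply Rmult_lt_0_compat; try apply pow_lt; lra).
  assert (Hg : g0hat al b C A K Kh s y = - (/2 * sqrt (Sx al b C A K Kh s y) - /2 * v0hat al A K Kh y) + Kh)
    by reflexivity.
  rewrite Hg. split; intro E.
  - assert (Hs : sqrt (Sx al b C A K Kh s y) = al * A * K * y ^ 2 + Kh)
      by (unfold v0hat in E; lra).
    assert (HS0 : 0 <= Sx al b C A K Kh s y).
    { unfold Sx. pose proof (rhat_pos b C y H0 H1 H6).
      assert (0 <= 4 * A * K * rhat b C y * y ^ 2 * s).
      { apply Rmult_le_pos; [|lra]. apply Rlt_le. repeat apply Rmult_lt_0_compat; try apply pow_lt; lra. }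
      assert (0 <= v0hat al A K Kh y ^ 2) by (rewrite <- Rsqr_pow2; apply Rle_0_sqr). lra. }
    pose proof (sqrt_sqrt _ HS0) as E2. rewrite Hs in E2.
    unfold Sx, v0hat, rhat in E2. change (b * C / y + 1 + b / C * y) with (Dn b C y) in E2.
    assert (Z : (al*A*K*y^2+Kh)*(al*A*K*y^2+Kh) - ((al*A*K*y^2-Kh)^2 + 4*A*K*/Dn b C y*y^2*s) = 0) by lra.
    assert (E3 : A * K * y ^ 2 * (s / Dn b C y - al * Kh) = 0).
    { apply (Rmult_eq_reg_l (-4)); [|lra]. rewrite Rmult_0_r. rewrite <- Z. field. lra. }
    assert (A * K * y ^ 2 <> 0).
    { apply Rgt_not_eq. repeat apply Rmult_lt_0_compat; try apply pow_lt; lra. }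
    apply Rmult_integral in E3. destruct E3 as [E3|E3]; [contradiction|].
    assert (s = s / Dn b C y * Dn b C y) by (field; lra). rewrite H8. nra.
  - subst s. rewrite sqrt_on by auto. unfold v0hat. field.
Qed.

Lemma G1_on al b C A K Kh y : 0 < al -> 0 < b -> 0 < C -> 0 < A -> 0 < K -> 0 < Kh -> 0 < y ->
  G1 al b C A K Kh (al * Kh * Dn b C y) y =
  A * K * al * Kh * y ^ 2 * Dn1 b C y / (Dn b C y * (al * A * K * y ^ 2 + Kh)).
Proof.
  intros. unfold G1. rewrite sqrt_on by auto. pose proof (Dn_pos b C y H0 H1 H5).
  assert (0 < al * A * K * y ^ 2) by (repeat apply Rmult_lt_0_compat; try apply pow_lt; lra).
  unfold v0hat. field. lra.
Qed.

Lemma Dn1_zero b C y : 0 < b -> 0 < C -> 0 < y -> (Dn1 b C y = 0 <-> y = C).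
Proof.
  intros. unfold Dn1. split; intro E.
  - assert (b * (y - C) * (y + C) = 0).
    { apply (Rmult_eq_reg_l (/ (C * y ^ 2))). rewrite Rmult_0_r, <- E. field. lra.
      apply Rgt_not_eq, Rinv_0_lt_compat. apply Rmult_lt_0_compat; try apply pow_lt; lra. }
    assert (b * (y - C) = 0) by (apply Rmult_integral in H2; destruct H2; auto; lra).
    apply Rmult_integral in H3; lra.
  - subst y. field. lra.
Qed.

Lemma G1_deriv_C al b C A K Kh : 0 < al -> 0 < b -> 0 < C -> 0 < A -> 0 < K -> 0 < Kh ->
  is_derive (fun y => G1 al b C A K Kh (al * Kh * (2 * b + 1)) y) C
    (2 * A * K * al * Kh * b / ((2 * b + 1) * (al * A * K * C ^ 2 + Kh))).
Proof.
  intros.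
  assert (HD : Dn b C C = 2 * b + 1) by (unfold Dn; field; lra).
  assert (HS : 0 < Sx al b C A K Kh (al * Kh * (2 * b + 1)) C).
  { apply Sx_pos; try lra. repeat apply Rmult_lt_0_compat; lra. }
  pose proof (sqrt_on al b C A K Kh C H H0 H1 H2 H3 H4 H1) as Hq. rewrite HD in Hq.
  assert (0 < al * A * K * C ^ 2) by (repeat apply Rmult_lt_0_compat; try apply pow_lt; lra).
  unfold G1, Sx, Dn1, Dn, v0hat, rhat. auto_derive.
  - replace (b * C * / C + 1 + b / C * C) with (2 * b + 1) by (field; lra).
    match goal with |- context [sqrt ?e] => replace e with (Sx al b C A K Kh (al * Kh * (2 * b + 1)) C)
      by (unfold Sx, v0hat, rhat; change (b * C / C + 1 + b / C * C) with (Dn b C C); rewrite HD; ring) end.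
    rewrite Hq. repeat split; try lra; try nra.
  - replace (b * C * / C + 1 + b / C * C) with (2 * b + 1) by (field; lra).
    match goal with |- context [sqrt ?e] => replace e with (Sx al b C A K Kh (al * Kh * (2 * b + 1)) C)
      by (unfold Sx, v0hat, rhat; change (b * C / C + 1 + b / C * C) with (Dn b C C); rewrite HD; ring) end.
    rewrite Hq. field. repeat split; lra.
Qed.

Lemma locally_pos (C : R) : 0 < C -> locally C (fun y => 0 < y).
Proof.
  intros HC. exists (mkposreal C HC). intros y Hy.
  unfold ball in Hy; simpl in Hy. unfold AbsRing_ball, abs, minus, plus, opp in Hy; simpl in Hy.
  apply Rabs_lt_between' in Hy. lra.
Qed.

Theorem proposition4 (alpha beta C A K Kh Ks : R) :
  0 < alpha -> 0 < beta -> 0 < C -> 0 < A -> 0 < K -> 0 < Kh -> 0 < Ks ->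
  alpha * Kh > Ks ->
  let f := f0hat beta C Ks in
  let g := g0hat alpha beta C A K Kh in
  let sB := alpha * Kh * (2 * beta + 1) in
  let etaB := C in
  (* S_B is the part of the critical manifold {g = 0} in s >= 0, eta > 0 *)
  (forall s eta, 0 <= s -> 0 < eta -> (g s eta = 0 <-> s = psi alpha beta C Kh eta)) /\
  (* F_B lies on S_B *)
  psi alpha beta C Kh etaB = sB /\
  (* F_B is the only fold point on S_B *)
  (forall eta, 0 < eta -> (fold_point g (psi alpha beta C Kh eta) eta <-> eta = etaB)) /\
  (* and it is a generic fold point *)
  generic_fold_point f g sB etaB.
Proof.
  intros Ha Hb HC HA HK HKh HKs Hs f g sB etaB.
  assert (HD : Dn beta C C = 2 * beta + 1) by (unfold Dn; field; lra).
  assert (HsB : sB = alpha * Kh * Dn beta C C) by (unfold sB; rewrite HD; ring).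
  assert (HsBp : 0 < sB) by (unfold sB; repeat apply Rmult_lt_0_compat; lra).
  split; [|split; [|split]].
  - intros s eta Hs0 He. apply crit; auto.
  - unfold etaB. rewrite psi_eq by auto. rewrite HD. reflexivity.
  - intros eta He. rewrite psi_eq by auto.
    pose proof (Dn_pos beta C eta Hb HC He) as HDe.
    assert (Hsp : 0 < alpha * Kh * Dn beta C eta) by (repeat apply Rmult_lt_0_compat; lra).
    pose proof (G_deriv alpha beta C A K Kh _ eta Hb HC HA HK Hsp He) as Hder.
    unfold fold_point, g. match goal with |- context [Derive ?F eta] => replace (Derive F eta) with (G1 alpha beta C A K Kh (alpha * Kh * Dn beta C eta) eta) by (symmetry; apply is_derive_unique; exact Hder) end.
    rewrite G1_on by auto.
    assert (0 < alpha * A * K * eta ^ 2) by (repeat apply Rmult_lt_0_compat; try apply pow_lt; lra).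
    split.
    + intros [_ [_ E]]. apply (Dn1_zero beta C eta Hb HC He).
      assert (E' : A * K * alpha * Kh * eta ^ 2 * Dn1 beta C eta = 0).
      { replace (A * K * alpha * Kh * eta ^ 2 * Dn1 beta C eta) with
          (A * K * alpha * Kh * eta ^ 2 * Dn1 beta C eta / (Dn beta C eta * (alpha * A * K * eta ^ 2 + Kh))
           * (Dn beta C eta * (alpha * A * K * eta ^ 2 + Kh))) by (field; lra).
        rewrite E. ring. }
      apply Rmult_integral in E'. destruct E' as [E'|E']; auto.
      exfalso. assert (0 < A * K * alpha * Kh * eta ^ 2)
        by (repeat apply Rmult_lt_0_compat; try apply pow_lt; lra). lra.
    + intros E. split; [|split].
      * apply crit; auto; try lra. rewrite psi_eq; auto.
      * exists (G1 alpha beta C A K Kh (alpha * Kh * Dn beta C eta) eta). exact Hder.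
      * rewrite (proj2 (Dn1_zero beta C eta Hb HC He) E). unfold Rdiv. ring.
  - unfold generic_fold_point. unfold etaB.
    assert (Hloc : locally C (fun y => G1 alpha beta C A K Kh sB y = Derive_n (g sB) 1 y)).
    { apply (filter_imp (fun y => 0 < y)); [|apply locally_pos; auto].
      intros y Hy. simpl. symmetry. apply is_derive_unique.
      apply G_deriv; auto. }
    pose proof (G1_deriv_C alpha beta C A K Kh Ha Hb HC HA HK HKh) as H2.
    fold sB in H2.
    pose proof (is_derive_ext_loc _ _ C _ Hloc H2) as H2'.
    pose proof (G_deriv alpha beta C A K Kh sB C Hb HC HA HK HsBp HC) as H1.
    assert (HG1 : G1 alpha beta C A K Kh sB C = 0).
    { rewrite HsB, G1_on by auto. rewrite (proj2 (Dn1_zero beta C C Hb HC HC) eq_refl).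
      unfold Rdiv. ring. }
    assert (HSx : 0 < Sx alpha beta C A K Kh sB C) by (apply Sx_pos; auto).
    assert (Hds : is_derive (fun x' => g x' C) sB
               (- (/ 2 * (4 * A * K * rhat beta C C * C ^ 2 / (2 * sqrt (Sx alpha beta C A K Kh sB C)))))).
    { unfold g, g0hat, q0hat.
      auto_derive.
      - match goal with |- context [0 < ?e] => replace e with (Sx alpha beta C A K Kh sB C)
          by (unfold Sx; ring) end. repeat split; auto.
      - match goal with |- context [sqrt ?e] => replace e with (Sx alpha beta C A K Kh sB C)
          by (unfold Sx; ring) end.
        pose proof (sqrt_lt_R0 _ HSx). field. lra. }
    split; [|split; [|split; [|split; [|split]]]].
    + split; [|split].
      * apply crit; auto; try lra. rewrite psi_eq; auto. 
      * exists (G1 alpha beta C A K Kh sB C). exact H1.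
      * rewrite <- HG1. apply is_derive_unique. exact H1.
    + change (ex_derive (Derive_n (g sB) 1) C). eexists. exact H2'.
    + change (Derive (Derive_n (g sB) 1) C <> 0). replace (Derive (Derive_n (g sB) 1) C) with (2 * A * K * alpha * Kh * beta / ((2 * beta + 1) * (alpha * A * K * C ^ 2 + Kh))) by (symmetry; apply is_derive_unique; exact H2').
      apply Rgt_not_eq. unfold Rdiv. apply Rmult_lt_0_compat.
      repeat apply Rmult_lt_0_compat; lra.
      apply Rinv_0_lt_compat. apply Rmult_lt_0_compat; [lra|].
      assert (0 < alpha * A * K * C ^ 2) by (repeat apply Rmult_lt_0_compat; try apply pow_lt; lra). lra.
    + eexists. exact Hds.
    + replace (Derive (fun x' => g x' C) sB) with (- (/ 2 * (4 * A * K * rhat beta C C * C ^ 2 / (2 * sqrt (Sx alpha beta C A K Kh sB C))))) by (symmetry; apply is_derive_unique; exact Hds).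
      pose proof (sqrt_lt_R0 _ HSx). pose proof (rhat_pos beta C C Hb HC HC).
      apply Rlt_not_eq.
      assert (0 < 4 * A * K * rhat beta C C * C ^ 2 / (2 * sqrt (Sx alpha beta C A K Kh sB C))).
      { apply Rdiv_lt_0_compat; [|lra]. repeat apply Rmult_lt_0_compat; try apply pow_lt; lra. }
      lra.
    + unfold f, f0hat. unfold rhat. change (beta * C / C + 1 + beta / C * C) with (Dn beta C C).
      rewrite HD. unfold sB.
      replace (- / (2 * beta + 1) * (alpha * Kh * (2 * beta + 1)) + Ks) with (Ks - alpha * Kh)
        by (field; lra). lra.
Qed.
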